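(* Let $d,q\geq 2$ be integers. Then: (a) for every $\theta_w,\theta_1,\theta_0\in\mathbb{Z}$, the density $\delta(q,d;0,\theta_w,0,\theta_1,\theta_0)$ exists; (b) if $d\mid q^n$ for some $n\in\mathbb{N}$, then the density $\delta(q,d;\mathbf{s})$ exists for every $\mathbf{s}\in\mathbb{Z}^5$.
   Context: For an integer $q\geq 2$ and $n\in\mathbb{N}$: $v_q(0)=0$ and, for $n>0$, $v_q(n)=\max\{k: q^k\mid n\}$; $w_q(n)=\sum_{i=0}^n v_q(i)$; $u_q(n)=\sum_{i=0}^n w_q(i)$. For $\mathbf{s}=(\theta_u,\theta_w,\theta_2,\theta_1,\theta_0)\in\mathbb{Z}^5$, $\gamma(A,q,d;\mathbf{s})$ is the number of $n\in\mathbb{N}$, $n<A$, with $\theta_u u_q(n)+\theta_w w_q(n)+\theta_2\frac{n(n+1)}{2}+\theta_1 n+\theta_0\equiv 0\pmod d$, and $\delta(q,d;\mathbf{s})=\lim_{N\to\infty}\gamma(N,q,d;\mathbf{s})/N$ (when the limit exists). *)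

(* Defs.v *)
From Stdlib Require Import Reals ZArith Arith List Lia.

(* v_q(n): q-adic valuation, with v_q(0) = 0.  Computed with fuel n
   (since q >= 2 and n > 0, at most n divisions are needed). *)
Fixpoint vq_fuel (fuel q n : nat) : nat :=
  match fuel with
  | O => O
  | S f => if Nat.eqb n 0 then O
           else if Nat.eqb (n mod q) 0 then S (vq_fuel f q (n / q)) else O
  end.

Definition vq (q n : nat) : nat := vq_fuel n q n.

Fixpoint wq (q n : nat) : nat :=
  match n with
  | O => vq q 0
  | S m => wq q m + vq q (S m)
  end.

Fixpoint uq (q n : nat) : nat :=
  match n with
  | O => wq q 0
  | S m => uq q m + wq q (S m)
  end.

Record params := mkParams { th_u : Z; th_w : Z; th_2 : Z; th_1 : Z; th_0 : Z }.

Definition poly_val (q : nat) (s : params) (n : nat) : Z :=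
  (th_u s * Z.of_nat (uq q n) + th_w s * Z.of_nat (wq q n)
   + th_2 s * Z.of_nat (n * (n + 1) / 2) + th_1 s * Z.of_nat n + th_0 s)%Z.

Definition satisfies (q d : nat) (s : params) (n : nat) : bool :=
  Z.eqb (Z.modulo (poly_val q s n) (Z.of_nat d)) 0.

Definition gamma (A q d : nat) (s : params) : nat :=
  length (filter (satisfies q d s) (seq 0 A)).

Definition density_exists (q d : nat) (s : params) : Prop :=
  exists L : R, Un_cv (fun N => (INR (gamma N q d s) / INR N)%R) L.

(* Main.v *)
Require Import Defs.
From Stdlib Require Import Reals ZArith Arith Lia Lra List Classical.

Section Arith.
Variable q : nat.
Hypothesis hq : (2 <= q)%nat.

Lemma vq_fuel_enough : forall f1 f2 n, (n <= f1)%nat -> (n <= f2)%nat ->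
  vq_fuel f1 q n = vq_fuel f2 q n.
Proof.
  induction f1 as [|f1 IH]; intros f2 n h1 h2.
  - assert (n = 0)%nat by lia; subst. destruct f2; reflexivity.
  - destruct f2 as [|f2].
    + assert (n = 0)%nat by lia; subst. reflexivity.
    + simpl. destruct (Nat.eqb n 0) eqn:E0; [reflexivity|].
      apply Nat.eqb_neq in E0.
      destruct (Nat.eqb (n mod q) 0); [|reflexivity].
      f_equal. apply IH.
      * assert (n / q < n)%nat by (apply Nat.div_lt; lia). lia.
      * assert (n / q < n)%nat by (apply Nat.div_lt; lia). lia.
Qed.

Lemma vq_0 : vq q 0 = 0%nat.
Proof. reflexivity. Qed.

Lemma vq_nonmult : forall n, (n mod q <> 0)%nat -> vq q n = 0%nat.
Proof.
  intros n h. unfold vq. destruct n as [|n]. { reflexivity. }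
  simpl vq_fuel. replace (Nat.eqb (S n) 0) with false by reflexivity.
  apply Nat.eqb_neq in h. rewrite h. reflexivity.
Qed.

Lemma vq_mult : forall n, (0 < n)%nat -> (n mod q = 0)%nat -> vq q n = S (vq q (n / q)).
Proof.
  intros n hn h. unfold vq. destruct n as [|n]. { lia. }
  simpl vq_fuel. replace (Nat.eqb (S n) 0) with false by reflexivity.
  rewrite h. simpl. f_equal. apply vq_fuel_enough.
  - assert (S n / q < S n)%nat by (apply Nat.div_lt; lia). lia.
  - lia.
Qed.

Lemma divmod_char : forall a x y, (y < q)%nat -> a = (q * x + y)%nat -> a / q = x /\ a mod q = y.
Proof.
  intros a x y hy ha. split.
  - symmetry. apply (Nat.div_unique a q x y); auto.
  - symmetry. apply (Nat.mod_unique a q x y); auto.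
Qed.

Lemma wq_0 : wq q 0 = 0%nat.
Proof. reflexivity. Qed.

Lemma wq_rec : forall m, wq q m = (m / q + wq q (m / q))%nat.
Proof.
  induction m as [|m IH].
  - rewrite Nat.Div0.div_0_l by lia. reflexivity.
  - simpl wq. rewrite IH.
    pose proof (Nat.div_mod_eq m q) as Hm.
    pose proof (Nat.mod_upper_bound m q ltac:(lia)) as Hb.
    set (k := (m / q)%nat) in *. set (r := (m mod q)%nat) in *.
    destruct (Nat.eq_dec (S r) q) as [E|E].
    +
      destruct (divmod_char (S m) (S k) 0 ltac:(lia) ltac:(lia)) as [D M].
      rewrite vq_mult by lia. rewrite D.
      idtac.
      simpl wq. fold k. lia.
    + destruct (divmod_char (S m) k (S r) ltac:(lia) ltac:(lia)) as [D M].
      rewrite vq_nonmult by lia. rewrite D. lia.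
Qed.

Lemma wq_digit : forall n b, (b < q)%nat -> wq q (q * n + b) = (n + wq q n)%nat.
Proof.
  intros n b hb. rewrite wq_rec.
  destruct (divmod_char (q*n+b) n b hb eq_refl) as [D _]. rewrite D. reflexivity.
Qed.

Lemma wq_small : forall b, (b < q)%nat -> wq q b = 0%nat.
Proof. intros b hb. pose proof (wq_digit 0 b hb). rewrite Nat.mul_0_r in H. simpl in H. rewrite H. reflexivity. Qed.

Lemma wq_add : forall K A r, (r < q ^ K)%nat ->
  wq q (A * q ^ K + r) = (wq q (A * q ^ K) + wq q r)%nat.
Proof.
  induction K as [|K IH]; intros A r hr.
  - simpl in hr. assert (r = 0)%nat by lia. subst. rewrite Nat.add_0_r, wq_0. lia.
  - pose proof (Nat.div_mod_eq r q) as Hr.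
    pose proof (Nat.mod_upper_bound r q ltac:(lia)) as Hb.
    set (r1 := (r / q)%nat) in *. set (b := (r mod q)%nat) in *.
    assert (hr1 : (r1 < q ^ K)%nat).
    { simpl in hr. nia. }
    replace (A * q ^ S K + r)%nat with (q * (A * q ^ K + r1) + b)%nat
      by (rewrite Hr; simpl; ring).
    rewrite wq_digit by auto. rewrite IH by auto.
    replace (A * q ^ S K)%nat with (q * (A * q ^ K) + 0)%nat by (simpl; ring).
    rewrite wq_digit by lia.
    rewrite Hr. rewrite wq_digit by auto. lia.
Qed.

Lemma wq_scale : forall K A, wq q (A * q ^ K) = (A * wq q (q ^ K) + wq q A)%nat.
Proof.
  induction K as [|K IH]; intros A.
  - simpl. rewrite Nat.mul_1_r. assert (wq q 1 = 0%nat) by (apply wq_small; lia). simpl in *. lia.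
  - replace (A * q ^ S K)%nat with (q * (A * q ^ K) + 0)%nat by (simpl; ring).
    rewrite wq_digit by lia. rewrite IH.
    replace (q ^ S K)%nat with (q * (q ^ K) + 0)%nat by (simpl; ring).
    rewrite wq_digit by lia. nia.
Qed.

Fixpoint Ssum (n : nat) : nat :=
  match n with O => O | S m => (Ssum m + wq q m)%nat end.

Fixpoint tri (n : nat) : nat :=
  match n with O => O | S m => (tri m + S m)%nat end.

Lemma uq_S : forall n, uq q n = Ssum (S n).
Proof.
  induction n as [|n IH]; simpl.
  - reflexivity.
  - simpl in IH. rewrite IH. reflexivity.
Qed.

Lemma tri_2 : forall n, (2 * tri n = n * (n + 1))%nat.
Proof. induction n as [|n IH]; simpl tri; nia. Qed.

Lemma tri_div : forall n, (n * (n + 1) / 2 = tri n)%nat.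
Proof.
  intros n. rewrite <- tri_2. rewrite Nat.mul_comm. apply Nat.div_mul. lia.
Qed.

Lemma tri_add : forall X r, tri (X + r) = (tri X + X * r + tri r)%nat.
Proof.
  intros X r. induction r as [|r IH].
  - rewrite Nat.add_0_r. simpl. lia.
  - rewrite Nat.add_succ_r. simpl tri. rewrite IH. nia.
Qed.

Lemma Ssum_shift : forall K A k, (k <= q ^ K)%nat ->
  Ssum (A * q ^ K + k) = (Ssum (A * q ^ K) + k * wq q (A * q ^ K) + Ssum k)%nat.
Proof.
  intros K A k. induction k as [|k IH]; intros hk.
  - rewrite Nat.add_0_r. simpl. lia.
  - rewrite Nat.add_succ_r. simpl Ssum. rewrite IH by lia.
    rewrite wq_add by lia. nia.
Qed.

Lemma uq_shift : forall K A r, (r < q ^ K)%nat ->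
  uq q (A * q ^ K + r) = (Ssum (A * q ^ K) + (r + 1) * wq q (A * q ^ K) + uq q r)%nat.
Proof.
  intros K A r hr. rewrite !uq_S.
  replace (S (A * q ^ K + r)) with (A * q ^ K + S r)%nat by lia.
  rewrite Ssum_shift by lia. replace (S r) with (r + 1)%nat by lia. reflexivity.
Qed.

Lemma Ssum_digits : forall Y k, (k <= q)%nat ->
  Ssum (q * Y + k) = (Ssum (q * Y) + k * (Y + wq q Y))%nat.
Proof.
  intros Y k. induction k as [|k IH]; intros hk.
  - rewrite Nat.add_0_r. lia.
  - rewrite Nat.add_succ_r. simpl Ssum. rewrite IH by lia.
    rewrite wq_digit by lia. nia.
Qed.

Lemma Ssum_q : forall Y, (Ssum (q * Y) + q * Y = q * Ssum Y + q * tri Y)%nat.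
Proof.
  induction Y as [|Y IH].
  - rewrite Nat.mul_0_r. simpl. lia.
  - replace (q * S Y)%nat with (q * Y + q)%nat by ring.
    rewrite Ssum_digits by lia. simpl Ssum. simpl tri. nia.
Qed.

Lemma tri_q : forall Y, (tri (q * Y) + tri (q - 1) * Y = q * q * tri Y)%nat.
Proof.
  intros Y.
  assert (H : (2 * (tri (q * Y) + tri (q - 1) * Y) = 2 * (q * q * tri Y))%nat).
  { rewrite Nat.mul_add_distr_l. rewrite Nat.mul_assoc. rewrite !tri_2.
    replace (2 * (q * q * tri Y))%nat with (q * q * (2 * tri Y))%nat by ring.
    rewrite tri_2. destruct q as [|q']; [lia|]. replace (S q' - 1)%nat with q' by lia. nia. }
  lia.
Qed.

Lemma divis : forall K A, Nat.divide (q ^ K) (tri (A * q ^ (S K))) /\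
                          Nat.divide (q ^ K) (Ssum (A * q ^ (S K))).
Proof.
  induction K as [|K IH]; intros A.
  - simpl. split; apply Nat.divide_1_l.
  - destruct (IH A) as [IH1 IH2].
    set (Y := (A * q ^ S K)%nat) in *.
    assert (EY : (A * q ^ S (S K) = q * Y)%nat) by (unfold Y; simpl; ring).
    rewrite EY.
    assert (DY : Nat.divide (q ^ S K) Y) by (exists A; unfold Y; ring).
    split.
    + apply (Nat.divide_add_cancel_r _ _ _ (Nat.divide_mul_r _ (tri (q-1)) _ DY)).
      rewrite Nat.add_comm. rewrite tri_q.
      destruct IH1 as [z Hz]. exists (q * z)%nat. rewrite Hz. simpl. ring.
    + apply (Nat.divide_add_cancel_r _ (q * Y)%nat).
      { apply Nat.divide_mul_r. exact DY. }
      rewrite Nat.add_comm, Ssum_q.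
      destruct IH1 as [z Hz]. destruct IH2 as [z2 Hz2].
      exists (z2 + z)%nat. rewrite Hz, Hz2. simpl. ring.
Qed.

End Arith.

Lemma php : forall M (f : nat -> nat), (forall i, (i <= M)%nat -> (f i < M)%nat) ->
  exists i j, (i < j)%nat /\ (j <= M)%nat /\ f i = f j.
Proof.
  intros M f hf. apply NNPP. intros Hn.
  assert (ND : NoDup (map f (seq 0 (S M)))).
  { apply NoDup_map_NoDup_ForallPairs; [|apply seq_NoDup].
    intros x y hx hy hxy. apply in_seq in hx, hy.
    destruct (Nat.lt_trichotomy x y) as [h|[h|h]]; auto; exfalso; apply Hn.
    - exists x, y. repeat split; auto; lia.
    - exists y, x. repeat split; auto; lia. }
  assert (INC : incl (map f (seq 0 (S M))) (seq 0 M)).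
  { intros z hz. apply in_map_iff in hz. destruct hz as [x [<- hx]].
    apply in_seq in hx. apply in_seq. specialize (hf x ltac:(lia)). lia. }
  pose proof (NoDup_incl_length ND INC) as L.
  rewrite length_map, !length_seq in L. lia.
Qed.

Section Tau.
Variable q d : nat.
Hypothesis hq : (2 <= q)%nat.
Hypothesis hd : (2 <= d)%nat.

Definition TE (x y : nat) : Prop :=
  x mod d = y mod d /\ wq q x mod d = wq q y mod d.

Lemma mod_add_congr : forall a b a' b', a mod d = a' mod d -> b mod d = b' mod d ->
  (a + b) mod d = (a' + b') mod d.
Proof.
  intros a b a' b' h1 h2. rewrite (Nat.Div0.add_mod a b), (Nat.Div0.add_mod a' b').
  rewrite h1, h2. reflexivity.
Qed.

Lemma mod_mul_congr : forall a b a' b', a mod d = a' mod d -> b mod d = b' mod d ->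
  (a * b) mod d = (a' * b') mod d.
Proof.
  intros a b a' b' h1 h2. rewrite (Nat.Div0.mul_mod a b), (Nat.Div0.mul_mod a' b').
  rewrite h1, h2. reflexivity.
Qed.

Lemma TE_compat : forall s A A' r, TE A A' -> (r < q ^ s)%nat ->
  TE (A * q ^ s + r) (A' * q ^ s + r).
Proof.
  intros s A A' r [h1 h2] hr. split.
  - apply mod_add_congr; auto. apply mod_mul_congr; auto.
  - rewrite !(wq_add q hq) by auto. rewrite !(wq_scale q hq).
    apply mod_add_congr; auto. apply mod_add_congr; auto. apply mod_mul_congr; auto.
Qed.

Lemma TE_sum : forall J a a' c c', (c < q ^ J)%nat -> (c' < q ^ J)%nat ->
  TE c (a' * q ^ J) -> TE c' (a * q ^ J) -> TE (a * q ^ J + c) (a' * q ^ J + c').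
Proof.
  intros J a a' c c' hc hc' [h1 h2] [h3 h4]. split.
  - rewrite (Nat.add_comm (a' * q ^ J)). apply mod_add_congr; auto.
  - rewrite !(wq_add q hq) by auto.
    rewrite (Nat.add_comm (wq q (a' * q ^ J))). apply mod_add_congr; auto.
Qed.

Definition tcode (x : nat) : nat := (x mod d * d + wq q x mod d)%nat.

Lemma tcode_lt : forall x, (tcode x < d * d)%nat.
Proof.
  intros x. unfold tcode.
  pose proof (Nat.mod_upper_bound x d ltac:(lia)).
  pose proof (Nat.mod_upper_bound (wq q x) d ltac:(lia)). nia.
Qed.

Lemma tcode_TE : forall x y, tcode x = tcode y -> TE x y.
Proof.
  intros x y h. unfold tcode in h.
  pose proof (Nat.mod_upper_bound x d ltac:(lia)).
  pose proof (Nat.mod_upper_bound (wq q x) d ltac:(lia)).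
  pose proof (Nat.mod_upper_bound y d ltac:(lia)).
  pose proof (Nat.mod_upper_bound (wq q y) d ltac:(lia)).
  assert (E1 := h). apply (f_equal (fun z => z / d)%nat) in E1.
  assert (E2 := h). apply (f_equal (fun z => z mod d)%nat) in E2.
  rewrite !Nat.div_add_l, !Nat.div_small in E1 by lia.
  rewrite !(Nat.add_comm (_ * d)), !Nat.Div0.mod_add, !Nat.mod_small in E2 by lia.
  split; lia.
Qed.

Lemma pump : forall n, exists c, (c < q ^ (d * d))%nat /\ TE c n.
Proof.
  intros n. induction n as [n IH] using (well_founded_induction lt_wf).
  set (J := (d * d)%nat).
  destruct (Nat.lt_ge_cases n (q ^ J)) as [hn|hn].
  { exists n. split; auto. split; reflexivity. }
  destruct (php J (fun s => tcode (n / q ^ s))) as [s1 [s2 [h12 [h2J hE]]]].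
  { intros i _. apply tcode_lt. }
  apply tcode_TE in hE.
  assert (qp : forall k, (0 < q ^ k)%nat) by (intros; apply Nat.neq_0_lt_0, Nat.pow_nonzero; lia).
  set (p1 := (n / q ^ s1)%nat) in *. set (p2 := (n / q ^ s2)%nat) in *.
  set (r1 := (n mod q ^ s1)%nat).
  assert (En : n = (p1 * q ^ s1 + r1)%nat).
  { unfold p1, r1. rewrite Nat.mul_comm. apply Nat.div_mod_eq. }
  assert (hr1 : (r1 < q ^ s1)%nat) by (apply Nat.mod_upper_bound; specialize (qp s1); lia).
  assert (Ep2 : p2 = (p1 / q ^ (s2 - s1))%nat).
  { unfold p1, p2. rewrite Nat.Div0.div_div. rewrite <- Nat.pow_add_r. f_equal. f_equal. lia. }
  assert (hp1 : (0 < p1)%nat).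
  { unfold p1. apply Nat.div_str_pos. split; auto.
    assert (q ^ s1 <= q ^ J)%nat by (apply Nat.pow_le_mono_r; lia). lia. }
  assert (hp12 : (p2 < p1)%nat).
  { rewrite Ep2. apply Nat.div_lt; auto. apply Nat.pow_gt_1; lia. }
  set (n' := (p2 * q ^ s1 + r1)%nat).
  assert (hn' : (n' < n)%nat).
  { unfold n'. rewrite En. specialize (qp s1). nia. }
  destruct (IH n' hn') as [c [hc Hc]].
  exists c. split; auto.
  assert (T : TE n' n).
  { rewrite En. unfold n'. apply TE_compat; auto. destruct hE as [e1 e2]. split; auto. }
  destruct Hc as [a1 a2]. destruct T as [b1 b2]. split; congruence.
Qed.

End Tau.

Fixpoint sumN (f : nat -> nat) (n : nat) : nat :=
  match n with O => O | S k => (sumN f k + f k)%nat end.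
Fixpoint sumR (f : nat -> R) (n : nat) : R :=
  match n with O => 0%R | S k => (sumR f k + f k)%R end.

Open Scope R_scope.

Lemma sumN_ext : forall f g n, (forall i, (i < n)%nat -> f i = g i) -> sumN f n = sumN g n.
Proof. intros f g n h. induction n; simpl; auto. rewrite IHn, h; auto. Qed.

Lemma sumR_ext : forall f g n, (forall i, (i < n)%nat -> f i = g i) -> sumR f n = sumR g n.
Proof. intros f g n h. induction n; simpl; auto. rewrite IHn, h; auto. Qed.

Lemma INR_sumN : forall f n, INR (sumN f n) = sumR (fun i => INR (f i)) n.
Proof. intros f n. induction n; simpl sumN; simpl sumR; auto. rewrite plus_INR, IHn. reflexivity. Qed.

Lemma sumR_le : forall f n D, (forall i, (i < n)%nat -> f i <= D) -> sumR f n <= INR n * D.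
Proof.
  intros f n D h. induction n; simpl sumR. { simpl; lra. }
  rewrite S_INR. assert (f n <= D) by (apply h; lia).
  assert (sumR f n <= INR n * D) by (apply IHn; intros; apply h; lia). lra.
Qed.

Lemma sumR_ge : forall f n D, (forall i, (i < n)%nat -> D <= f i) -> INR n * D <= sumR f n.
Proof.
  intros f n D h. induction n; simpl sumR. { simpl; lra. }
  rewrite S_INR. assert (D <= f n) by (apply h; lia).
  assert (INR n * D <= sumR f n) by (apply IHn; intros; apply h; lia). lra.
Qed.

Lemma sumR_le_one : forall f n D dl i0, (forall i, (i < n)%nat -> f i <= D) -> (i0 < n)%nat ->
  f i0 <= D - dl -> sumR f n <= INR n * D - dl.
Proof.
  intros f n D dl i0 h hi0 hf. induction n; [lia|]. simpl sumR. rewrite S_INR.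
  destruct (Nat.eq_dec i0 n) as [->|ne].
  - assert (sumR f n <= INR n * D) by (apply sumR_le; intros; apply h; lia). lra.
  - assert (sumR f n <= INR n * D - dl) by (apply IHn; [intros; apply h; lia| lia]).
    assert (f n <= D) by (apply h; lia). lra.
Qed.

Lemma sumR_sub_const : forall f c n, sumR (fun i => f i - c) n = sumR f n - INR n * c.
Proof. intros f c n. induction n; simpl sumR. { simpl; lra. } rewrite IHn, S_INR. lra. Qed.

Lemma sumR_const_sub : forall f c n, sumR (fun i => c - f i) n = INR n * c - sumR f n.
Proof. intros f c n. induction n; simpl sumR. { simpl; lra. } rewrite IHn, S_INR. lra. Qed.

Lemma sumR_scal : forall f c n, sumR (fun i => c * f i) n = c * sumR f n.
Proof. intros f c n. induction n; simpl sumR. { lra. } rewrite IHn. lra. Qed.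

Lemma contract : forall (x y : nat -> R) n Dl i0 j0,
  (forall i j, (i < n)%nat -> (j < n)%nat -> x i - y j <= Dl) ->
  (i0 < n)%nat -> (j0 < n)%nat -> x i0 = y j0 ->
  INR n * (sumR x n - sumR y n) <= INR n * (INR n * Dl) - Dl.
Proof.
  intros x y n Dl i0 j0 h hi hj e.
  assert (E : INR n * (sumR x n - sumR y n) =
              sumR (fun i => sumR (fun j => x i - y j) n) n).
  { rewrite (sumR_ext (fun i => sumR (fun j => x i - y j) n) (fun i => INR n * x i - sumR y n)).
    - rewrite sumR_sub_const, sumR_scal. ring.
    - intros i _. rewrite sumR_const_sub. reflexivity. }
  rewrite E. apply sumR_le_one with (i0 := i0).
  - intros i hi'. apply sumR_le. intros j hj'. apply h; auto.
  - exact hi.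
  - replace (INR n * Dl - Dl) with (INR n * Dl - (Dl - 0)) by ring.
    apply sumR_le_one with (i0 := j0).
    + intros j hj'. apply h; auto.
    + exact hj.
    + rewrite e. lra.
Qed.

Section Dens.
Variable P : nat -> bool.
Variable q : nat.
Hypothesis hq : (2 <= q)%nat.

Definition cntr (s len : nat) : nat := length (filter P (seq s len)).

Lemma cntr_app : forall s x y, cntr s (x + y) = (cntr s x + cntr (s + x) y)%nat.
Proof. intros. unfold cntr. rewrite seq_app, filter_app, length_app. reflexivity. Qed.

Lemma cntr_le : forall s len, (cntr s len <= len)%nat.
Proof. intros. unfold cntr. rewrite <- (length_seq len s) at 2. apply filter_length_le. Qed.

Lemma cntr_ext : forall s s' L, (forall r, (r < L)%nat -> P (s + r) = P (s' + r)) ->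
  cntr s L = cntr s' L.
Proof.
  intros s s' L h. induction L. { reflexivity. }
  replace (S L) with (L + 1)%nat by lia. rewrite !cntr_app. rewrite IHL by (intros; apply h; lia).
  f_equal. unfold cntr. simpl. rewrite (h L) by lia. destruct (P (s' + L)); reflexivity.
Qed.

Lemma cntr_blocks : forall k s L, cntr s (k * L) = sumN (fun c => cntr (s + c * L) L) k.
Proof.
  induction k as [|k IH]; intros s L. { reflexivity. }
  rewrite Nat.mul_succ_l, cntr_app, IH. simpl sumN. reflexivity.
Qed.

Definition cnt (a K : nat) : nat := cntr (a * q ^ K) (q ^ K).

Lemma cnt_split : forall a K J, cnt a (K + J) = sumN (fun c => cnt (a * q ^ J + c) K) (q ^ J).
Proof.
  intros a K J. unfold cnt.
  replace (q ^ (K + J))%nat with (q ^ J * q ^ K)%nat by (rewrite Nat.pow_add_r; ring).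
  rewrite cntr_blocks. apply sumN_ext. intros i _. f_equal. ring.
Qed.

Lemma qpos : forall k, (0 < q ^ k)%nat.
Proof. intros. apply Nat.neq_0_lt_0, Nat.pow_nonzero. lia. Qed.

Variable K0 J : nat.
Hypothesis coup : forall K, (K0 <= K)%nat -> forall a a', exists c c',
  (c < q ^ J)%nat /\ (c' < q ^ J)%nat /\
  forall r, (r < q ^ K)%nat -> P ((a * q ^ J + c) * q ^ K + r) = P ((a' * q ^ J + c') * q ^ K + r).

Definition Kn (n : nat) : nat := (K0 + n * J)%nat.
Definition BB : R := INR (q ^ J).
Definition rho : R := 1 - 1 / (BB * BB).

Lemma BB_ge1 : 1 <= BB.
Proof. unfold BB. pose proof (qpos J). apply (le_INR 1). lia. Qed.

Lemma rho_bounds : 0 <= rho < 1.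
Proof.
  pose proof BB_ge1. unfold rho.
  assert (1 <= BB * BB) by nra.
  assert (0 < 1 / (BB * BB)) by (apply Rdiv_lt_0_compat; lra).
  assert (1 / (BB * BB) <= 1).
  { unfold Rdiv. rewrite Rmult_1_l. rewrite <- Rinv_1. apply Rinv_le_contravar; lra. }
  lra.
Qed.

Lemma osc : forall n a a', INR (cnt a (Kn n)) - INR (cnt a' (Kn n)) <= rho ^ n * INR (q ^ Kn n).
Proof.
  induction n as [|n IH]; intros a a'.
  - simpl pow. pose proof (cntr_le (a * q ^ Kn 0) (q ^ Kn 0)).
    pose proof (pos_INR (cnt a' (Kn 0))). apply le_INR in H. unfold cnt in *. lra.
  - replace (Kn (S n)) with (Kn n + J)%nat by (unfold Kn; simpl; lia).
    set (K := Kn n) in *.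
    rewrite !cnt_split, !INR_sumN.
    destruct (coup K ltac:(unfold K, Kn; lia) a a') as [c0 [c0' [h0 [h0' hP]]]].
    set (Dl := rho ^ n * INR (q ^ K)).
    pose proof (contract (fun c => INR (cnt (a * q ^ J + c) K)) (fun c => INR (cnt (a' * q ^ J + c) K))
                   (q ^ J) Dl c0 c0') as HC.
    assert (HC' : INR (q ^ J) * (sumR (fun c => INR (cnt (a * q ^ J + c) K)) (q ^ J) -
                  sumR (fun c => INR (cnt (a' * q ^ J + c) K)) (q ^ J))
                 <= INR (q ^ J) * (INR (q ^ J) * Dl) - Dl).
    { apply HC; [intros i j _ _; apply IH | exact h0 | exact h0' |].
      f_equal. unfold cnt. apply cntr_ext. intros r hr. apply hP; auto. }
    clear HC. fold BB in HC'.
    rewrite Nat.pow_add_r, mult_INR. fold BB.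
    pose proof BB_ge1.
    apply (Rmult_le_reg_l BB); [lra|].
    replace (BB * (rho ^ S n * (INR (q ^ K) * BB))) with (BB * (BB * Dl) - Dl).
    + exact HC'.
    + unfold Dl, rho. simpl pow. field. lra.
Qed.

Lemma approx : forall n N, (0 < N)%nat ->
  Rabs (INR (cntr 0 N) / INR N - INR (cnt 0 (Kn n)) / INR (q ^ Kn n)) <=
  rho ^ n + INR (q ^ Kn n) / INR N.
Proof.
  intros n N hN. set (K := Kn n). set (L := (q ^ K)%nat).
  assert (hL : (0 < L)%nat) by apply qpos.
  set (Q := (N / L)%nat). set (R0 := (N mod L)%nat).
  assert (EN : N = (Q * L + R0)%nat) by (unfold Q, R0; rewrite Nat.mul_comm; apply Nat.div_mod_eq).
  assert (hR : (R0 < L)%nat) by (apply Nat.mod_upper_bound; lia).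
  assert (EC : cntr 0 N = (sumN (fun a => cnt a K) Q + cntr (Q * L) R0)%nat).
  { rewrite EN at 1. rewrite cntr_app, cntr_blocks. f_equal. }
  rewrite EC, plus_INR, INR_sumN.
  set (S := sumR (fun a => INR (cnt a K)) Q).
  set (cR := INR (cntr (Q * L) R0)).
  set (c0 := INR (cnt 0 K)). fold L.
  set (Lr := INR L). set (Nr := INR N). set (Qr := INR Q). set (Rr := INR R0).
  set (Dl := rho ^ n * Lr).
  assert (ENr : Nr = Qr * Lr + Rr) by (unfold Nr, Qr, Lr, Rr; rewrite EN, plus_INR, mult_INR; reflexivity).
  assert (hLr : 0 < Lr) by (apply lt_0_INR; lia).
  assert (hNr : 0 < Nr) by (apply lt_0_INR; lia).
  assert (hQr : 0 <= Qr) by apply pos_INR.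
  assert (hRr : 0 <= Rr) by apply pos_INR.
  assert (hRL : Rr <= Lr) by (apply le_INR; lia).
  assert (hcR : 0 <= cR <= Rr) by (split; [apply pos_INR | apply le_INR, cntr_le]).
  assert (hc0 : 0 <= c0 <= Lr) by (split; [apply pos_INR | apply le_INR, cntr_le]).
  assert (hrho : 0 <= rho ^ n) by (apply pow_le; apply rho_bounds).
  assert (hD : 0 <= Dl) by (unfold Dl; nra).
  set (e := S - Qr * c0).
  assert (he : - (Qr * Dl) <= e <= Qr * Dl).
  { unfold e, S. rewrite <- sumR_sub_const. split.
    - replace (- (Qr * Dl)) with (Qr * - Dl) by ring. apply sumR_ge.
      intros i _. pose proof (osc n 0 i). fold K in H. fold L in H. fold Lr in H. fold c0 in H. unfold Dl. lra.
    - apply sumR_le. intros i _. pose proof (osc n i 0). fold K in H. fold L in H. fold Lr in H. fold c0 in H. unfold Dl. lra. }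
  set (T := Lr * e + cR * Lr - c0 * Rr).
  assert (ET : (S + cR) / Nr - c0 / Lr = T / (Nr * Lr)).
  { unfold T, e. rewrite ENr. field. split; lra. }
  assert (b1 : - (Lr * (Qr * Dl)) <= Lr * e <= Lr * (Qr * Dl)).
  { split; [replace (- (Lr * (Qr * Dl))) with (Lr * (- (Qr * Dl))) by ring|];
      apply Rmult_le_compat_l; lra. }
  assert (b2 : 0 <= cR * Lr <= Rr * Lr) by (split; nra).
  assert (b3 : 0 <= c0 * Rr <= Lr * Rr) by (split; nra).
  assert (QL : Qr * Lr <= Nr) by lra.
  assert (b4 : Lr * (Qr * Dl) <= rho ^ n * Nr * Lr).
  { unfold Dl. replace (Lr * (Qr * (rho ^ n * Lr))) with (rho ^ n * Lr * (Qr * Lr)) by ring.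
    replace (rho ^ n * Nr * Lr) with (rho ^ n * Lr * Nr) by ring.
    apply Rmult_le_compat_l; nra. }
  assert (b5 : Lr * Rr <= Lr * Lr) by nra.
  rewrite ET. apply Rabs_le. split.
  - apply (Rmult_le_reg_r (Nr * Lr)); [nra|].
    replace (T / (Nr * Lr) * (Nr * Lr)) with T by (field; lra).
    replace (- (rho ^ n + Lr / Nr) * (Nr * Lr)) with (- (rho ^ n * Nr * Lr + Lr * Lr)) by (field; lra).
    unfold T. lra.
  - apply (Rmult_le_reg_r (Nr * Lr)); [nra|].
    replace (T / (Nr * Lr) * (Nr * Lr)) with T by (field; lra).
    replace ((rho ^ n + Lr / Nr) * (Nr * Lr)) with (rho ^ n * Nr * Lr + Lr * Lr) by (field; lra).
    unfold T. lra.
Qed.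

Theorem dens : exists l, Un_cv (fun N => INR (cntr 0 N) / INR N) l.
Proof.
  assert (HC : Cauchy_crit (fun N => INR (cntr 0 N) / INR N)).
  { intros eps heps.
    destruct rho_bounds as [r0 r1].
    destruct (pow_lt_1_zero rho ltac:(rewrite Rabs_pos_eq; lra) (eps / 4) ltac:(lra)) as [n0 Hn0].
    specialize (Hn0 n0 (le_n _)).
    set (Lr := INR (q ^ Kn n0)).
    assert (hLr : 0 < Lr) by (apply lt_0_INR, qpos).
    destruct (INR_unbounded (4 * Lr / eps)) as [N1 HN1].
    exists (Nat.max N1 1). intros n m hn hm.
    set (beta := INR (cnt 0 (Kn n0)) / INR (q ^ Kn n0)).
    assert (key : forall k, (k >= Nat.max N1 1)%nat ->
              Rabs (INR (cntr 0 k) / INR k - beta) < eps / 2).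
    { intros k hk. eapply Rle_lt_trans. { apply approx. lia. }
      fold Lr. assert (rho ^ n0 <= Rabs (rho ^ n0)) by apply RRle_abs.
      assert (INR N1 <= INR k) by (apply le_INR; lia).
      assert (hk0 : 0 < INR k) by (apply lt_0_INR; lia).
      assert (Lr / INR k < eps / 4).
      { apply (Rmult_lt_reg_r (INR k)); auto. replace (Lr / INR k * INR k) with Lr by (field; lra).
        assert (4 * Lr / eps * eps = 4 * Lr) by (field; lra).
        assert (4 * Lr / eps * eps < INR k * eps) by (apply Rmult_lt_compat_r; lra). lra. }
      lra. }
    unfold R_dist.
    replace (INR (cntr 0 n) / INR n - INR (cntr 0 m) / INR m) with
      ((INR (cntr 0 n) / INR n - beta) - (INR (cntr 0 m) / INR m - beta)) by ring.
    eapply Rle_lt_trans. { apply Rabs_triang. }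
    rewrite Rabs_Ropp. pose proof (key n hn). pose proof (key m hm). lra. }
  destruct (R_complete _ HC) as [l Hl]. exists l. exact Hl.
Qed.

End Dens.
Close Scope R_scope.

Section Final.
Variable q d : nat.
Hypothesis hq : (2 <= q)%nat.
Hypothesis hd : (2 <= d)%nat.

Lemma pv_decomp : forall s K A r, (r < q ^ K)%nat ->
  poly_val q s (A * q ^ K + r) =
  (th_u s * (Z.of_nat (Ssum q (A * q ^ K)) + (Z.of_nat r + 1) *
        (Z.of_nat A * Z.of_nat (wq q (q ^ K)) + Z.of_nat (wq q A)) + Z.of_nat (uq q r))
   + th_w s * ((Z.of_nat A * Z.of_nat (wq q (q ^ K)) + Z.of_nat (wq q A)) + Z.of_nat (wq q r))
   + th_2 s * (Z.of_nat (tri (A * q ^ K)) + Z.of_nat A * Z.of_nat (q ^ K) * Z.of_nat r + Z.of_nat (tri r))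
   + th_1 s * (Z.of_nat A * Z.of_nat (q ^ K) + Z.of_nat r) + th_0 s)%Z.
Proof.
  intros s K A r hr. unfold poly_val.
  rewrite (uq_shift q hq) by auto. rewrite (wq_add q hq) by auto.
  rewrite (tri_div q hq (A * q ^ K + r)), (tri_add q hq). rewrite !(wq_scale q hq).
  rewrite !Nat2Z.inj_add, !Nat2Z.inj_mul, !Nat2Z.inj_add, !Nat2Z.inj_mul. simpl (Z.of_nat 1). ring.
Qed.

Lemma modeq_Z : forall a b, a mod d = b mod d ->
  exists al, Z.of_nat a = (Z.of_nat b + Z.of_nat d * al)%Z.
Proof.
  intros a b h. exists (Z.of_nat (a / d) - Z.of_nat (b / d))%Z.
  pose proof (Nat.div_mod_eq a d). pose proof (Nat.div_mod_eq b d).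
  assert (Z.of_nat a = Z.of_nat d * Z.of_nat (a / d) + Z.of_nat (a mod d))%Z by (rewrite <- Nat2Z.inj_mul, <- Nat2Z.inj_add; congruence).
  assert (Z.of_nat b = Z.of_nat d * Z.of_nat (b / d) + Z.of_nat (b mod d))%Z by (rewrite <- Nat2Z.inj_mul, <- Nat2Z.inj_add; congruence).
  rewrite h in *. lia.
Qed.

Lemma mod_eq_of : forall E1 E2 k, E1 = (E2 + Z.of_nat d * k)%Z ->
  (E1 mod Z.of_nat d = E2 mod Z.of_nat d)%Z.
Proof. intros. subst. rewrite Z.mul_comm. apply Z_mod_plus_full. Qed.

Lemma divZ : forall a b, Nat.divide a b -> exists k, Z.of_nat b = (Z.of_nat a * k)%Z.
Proof. intros a b [z ->]. exists (Z.of_nat z). rewrite Nat2Z.inj_mul. ring. Qed.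

Lemma sat_compat : forall s K A1 A2 r, TE q d A1 A2 -> (r < q ^ K)%nat ->
  ((th_u s = 0 /\ th_2 s = 0)%Z \/ (exists K', K = S K' /\ Nat.divide d (q ^ K'))) ->
  satisfies q d s (A1 * q ^ K + r) = satisfies q d s (A2 * q ^ K + r).
Proof.
  intros s K A1 A2 r [h1 h2] hr hc. unfold satisfies.
  rewrite !pv_decomp by auto. f_equal.
  destruct (modeq_Z _ _ h1) as [al Hal]. destruct (modeq_Z _ _ h2) as [be Hbe].
  set (Wk := Z.of_nat (wq q (q ^ K))). set (Qk := Z.of_nat (q ^ K)).
  destruct hc as [[hu h2'] | [K' [-> hdiv]]].
  - rewrite hu, h2'.
    apply mod_eq_of with (k := (th_w s * (al * Wk + be) + th_1 s * al * Qk)%Z).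
    rewrite Hal, Hbe. ring.
  - destruct (divis q hq K' A1) as [t1 s1]. destruct (divis q hq K' A2) as [t2 s2].
    assert (D1 : Nat.divide d (tri (A1 * q ^ S K'))) by exact (Nat.divide_trans _ _ _ hdiv t1).
    assert (D2 : Nat.divide d (tri (A2 * q ^ S K'))) by exact (Nat.divide_trans _ _ _ hdiv t2).
    assert (D3 : Nat.divide d (Ssum q (A1 * q ^ S K'))) by exact (Nat.divide_trans _ _ _ hdiv s1).
    assert (D4 : Nat.divide d (Ssum q (A2 * q ^ S K'))) by exact (Nat.divide_trans _ _ _ hdiv s2).
    destruct (divZ _ _ D1) as [ta Ha]. destruct (divZ _ _ D2) as [tb Hb].
    destruct (divZ _ _ D3) as [sa Hsa]. destruct (divZ _ _ D4) as [sb Hsb].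
    apply mod_eq_of with (k := (th_u s * (sa - sb + (Z.of_nat r + 1) * (al * Wk + be))
        + th_w s * (al * Wk + be) + th_2 s * (ta - tb + al * Qk * Z.of_nat r) + th_1 s * al * Qk)%Z).
    fold Wk Qk. rewrite Ha, Hb, Hsa, Hsb, Hal, Hbe. ring.
Qed.

Lemma coupling : forall s K0, 
  (forall K, (K0 <= K)%nat -> (th_u s = 0 /\ th_2 s = 0)%Z \/ (exists K', K = S K' /\ Nat.divide d (q ^ K'))) ->
  forall K, (K0 <= K)%nat -> forall a a', exists c c',
  (c < q ^ (d * d))%nat /\ (c' < q ^ (d * d))%nat /\
  forall r, (r < q ^ K)%nat ->
    satisfies q d s ((a * q ^ (d * d) + c) * q ^ K + r) =
    satisfies q d s ((a' * q ^ (d * d) + c') * q ^ K + r).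
Proof.
  intros s K0 hcase K hK a a'.
  destruct (pump q d hq hd (a' * q ^ (d * d))) as [c [hc Hc]].
  destruct (pump q d hq hd (a * q ^ (d * d))) as [c' [hc' Hc']].
  exists c, c'. split; auto. split; auto. intros r hr.
  apply sat_compat; auto. apply TE_sum; auto.
Qed.

End Final.

Theorem theorem3p1 (q d : nat) (hq : (2 <= q)%nat) (hd : (2 <= d)%nat) :
  (forall tw t1 t0 : Z, density_exists q d (mkParams 0 tw 0 t1 t0)) /\
  ((exists n : nat, Nat.divide d (q ^ n)) ->
     forall s : params, density_exists q d s).
Proof.
  split.
  - intros tw t1 t0. unfold density_exists, gamma.
    destruct (dens (satisfies q d (mkParams 0 tw 0 t1 t0)) q hq 0 (d * d)) as [l Hl].
    { apply (coupling q d hq hd _ 0). intros K _. left. split; reflexivity. }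
    exists l. exact Hl.
  - intros [m hm] s. unfold density_exists, gamma.
    destruct (dens (satisfies q d s) q hq (S m) (d * d)) as [l Hl].
    { apply (coupling q d hq hd _ (S m)). intros K hK. right.
      exists (K - 1)%nat. split; [lia|].
      apply (Nat.divide_trans _ (q ^ m)); auto.
      exists (q ^ (K - 1 - m))%nat. rewrite <- Nat.pow_add_r. f_equal. lia. }
    exists l. exact Hl.
Qed.
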